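(* Let $p\in\mathbb Z$ with $1\le p\le m$, let $M$ be a polynomial $\mathfrak{gl}_{m|n}$-module and let $\lambda$ be a $(p|n)$-hook partition. Then $$\overline{\mathfrak{tr}}_{p|n}(M)^{\rm sing}_{\bar\lambda^{p|n}}=M^{\sigma_p\text{-}{\rm sing}}_{\bar\lambda^{\sigma_p}}.$$
   Context: $I_{m|n}=\{1,\dots,m\}\cup\{\tfrac12,\dots,n-\tfrac12\}$ with standard order $1<\dots<m<\tfrac12<\dots<n-\tfrac12$ (integers even, half-integers odd); $\mathfrak{gl}_{m|n}$ has basis $E_{i,j}$, Cartan subalgebra $\mathfrak h_{m|n}$ spanned by $E_{i,i}$, dual basis $\epsilon_i$. A module is polynomial if $\mathfrak h_{m|n}$-semisimple with weights in $\sum_{i\in I_{m|n}}\mathbb Z_{\ge0}\epsilon_i$. $\mathfrak{gl}_{p|n}\subseteq\mathfrak{gl}_{m|n}$ is the span of $E_{i,j}$ with $i,j\in I_{p|n}=\{1,\dots,p\}\cup\{\tfrac12,\dots,n-\tfrac12\}$, and $\overline{\mathfrak{tr}}_{p|n}(M)=\bigoplus_\nu M_\nu$, the sum over weights $\nu$ of $M$ with $\nu(E_{i,i})=0$ for $i=p+1,\dots,m$, a $\mathfrak{gl}_{p|n}$-module. For a $(p|n)$-hook partition $\lambda$ ($\lambda_{p+1}\le n$), with conjugate $\lambda'$ and $\langle x\rangle=\max(x,0)$: $\bar\lambda^{p|n}=\sum_{i=1}^p\lambda_i\epsilon_i+\sum_{i=1}^n\langle\lambda'_i-p\rangle\epsilon_{i-1/2}$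 (regarded as a weight of $\mathfrak{gl}_{m|n}$ vanishing on $E_{i,i}$, $i>p$), and $\bar\lambda^{\sigma_p}=\sum_{i=1}^p\lambda_i\epsilon_i+\sum_{i=1}^n\langle\lambda'_i-p\rangle\epsilon_{i-1/2}+\sum_{i=p+1}^m\langle\lambda_i-n\rangle\epsilon_i$. For a $\mathfrak{gl}_{p|n}$-module $N$, $N^{\rm sing}_\mu=\{v\in N_\mu: E_{i,j}v=0 \text{ for } i<j \text{ in } I_{p|n}\}$ (standard order). Let $<_{\sigma_p}$ be the total order $1<\dots<p<\tfrac12<\dots<n-\tfrac12<p+1<\dots<m$ on $I_{m|n}$; $M^{\sigma_p\text{-sing}}_\mu=\{v\in M_\mu: E_{i,j}v=0 \text{ for all } i<_{\sigma_p}j\}$. *)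

(* Defs.v *)
From HB Require Import structures.
From Stdlib Require List.
From mathcomp Require Import all_boot all_order all_algebra.
Set Implicit Arguments. Unset Strict Implicit. Unset Printing Implicit Defensive.
Import GRing.Theory.
Local Open Scope ring_scope.

(* Index set I_{m|n}: [inl i] (i : 'I_m) stands for the even index i+1,
   [inr j] (j : 'I_n) stands for the odd index j + 1/2. *)
Definition idx (m n : nat) := ('I_m + 'I_n)%type.

Definition parity (m n : nat) (a : idx m n) : bool :=
  if a is inr _ then true else false.

Definition std_rank (m n : nat) (a : idx m n) : nat :=
  match a with inl i => nat_of_ord i | inr j => (m + j)%N end.
Definition std_lt (m n : nat) (a b : idx m n) : bool :=
  (std_rank a < std_rank b)%N.

(* order <_{sigma_p}: 1 < ... < p < 1/2 < ... < n-1/2 < p+1 < ... < m *)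
Definition sigma_rank (m n p : nat) (a : idx m n) : nat :=
  match a with
  | inl i => if (i < p)%N then nat_of_ord i else (n + i)%N
  | inr j => (p + j)%N
  end.
Definition sigma_lt (m n p : nat) (a b : idx m n) : bool :=
  (sigma_rank p a < sigma_rank p b)%N.

Definition in_sub (m n p : nat) (a : idx m n) : bool :=
  match a with inl i => (i < p)%N | inr _ => true end.

Section Modules.
Variables (m n : nat) (K : fieldType) (V : lmodType K).
Variable E : idx m n -> idx m n -> V -> V.

Definition psign (a b c d : idx m n) : K :=
  (-1) ^+ ((parity a (+) parity b) && (parity c (+) parity d)).

Definition is_gl_module : Prop :=
  (forall a b (c : K) (u v : V), E a b (c *: u + v) = c *: E a b u + E a b v) /\
  (forall a b c d (v : V),
     E a b (E c d v) - psign a b c d *: E c d (E a b v)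
     = (if b == c then E a d v else 0)
       - psign a b c d *: (if d == a then E c b v else 0)).

Definition weight_vec (mu : idx m n -> K) (v : V) : Prop :=
  forall a, E a a v = mu a *: v.

Definition h_semisimple : Prop :=
  forall v : V, exists s : seq ((idx m n -> K) * V),
    v = \sum_(x <- s) x.2 /\ (forall x, List.In x s -> weight_vec x.1 x.2).

Definition polynomial_module : Prop :=
  h_semisimple /\
  forall (mu : idx m n -> K) (v : V), v != 0 -> weight_vec mu v ->
    exists k : idx m n -> nat, forall a, mu a = (k a)%:R.

(* v in trbar_{p|n}(M) = (+)_{nu, nu(E_ii)=0 for i>p} M_nu *)
Definition in_trunc (p : nat) (v : V) : Prop :=
  exists s : seq ((idx m n -> K) * V),
    v = \sum_(x <- s) x.2 /\
    (forall x, List.In x s ->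
       weight_vec x.1 x.2 /\ (forall a, ~~ in_sub p a -> x.1 a = 0)).

(* v in trbar_{p|n}(M)^sing_mu  (mu a only matters for a in I_{p|n}) *)
Definition trunc_sing (p : nat) (mu : idx m n -> K) (v : V) : Prop :=
  in_trunc p v /\
  (forall a, in_sub p a -> E a a v = mu a *: v) /\
  (forall a b, in_sub p a -> in_sub p b -> std_lt a b -> E a b v = 0).

Definition sigma_sing (p : nat) (mu : idx m n -> K) (v : V) : Prop :=
  weight_vec mu v /\ (forall a b, sigma_lt p a b -> E a b v = 0).

End Modules.

(* Partitions: weakly decreasing sequences of naturals; part i = lambda_{i+1}. *)
Definition is_partition (la : seq nat) : Prop := sorted geq la.
Definition part (la : seq nat) (i : nat) : nat := nth 0%N la i.
Definition conj_part (la : seq nat) (k : nat) : nat := count (fun x => k <= x)%N la.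
Definition hook (p n : nat) (la : seq nat) : Prop := (part la p <= n)%N.

(* bar lambda^{p|n}, as a weight of gl_{m|n} (nat subtraction = <x>) *)
Definition lam_pn (m n p : nat) (la : seq nat) (a : idx m n) : nat :=
  match a with
  | inl i => if (i < p)%N then part la i else 0%N
  | inr j => (conj_part la j.+1 - p)%N
  end.

Definition lam_sigma (m n p : nat) (la : seq nat) (a : idx m n) : nat :=
  match a with
  | inl i => if (i < p)%N then part la i else (part la i - n)%N
  | inr j => (conj_part la j.+1 - p)%N
  end.

(* Main.v *)
Require Import Defs.
From HB Require Import structures.
From mathcomp Require Import all_boot all_order all_algebra.
From mathcomp Require Import zify.
Set Implicit Arguments. Unset Strict Implicit. Unset Printing Implicit Defensive.
Import GRing.Theory.
Local Open Scope ring_scope.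

Section Aux.
Variables (m n : nat) (K : fieldType) (V : lmodType K).
Variable E : idx m n -> idx m n -> V -> V.
Hypothesis hE : is_gl_module E.

Lemma E0 a b : E a b 0 = 0.
Proof.
have := (proj1 hE a b (-1) 0 0); rewrite scaler0 addr0 scaleN1r => h.
by rewrite -[RHS](addNr (E a b 0)) -h.
Qed.

Lemma ED a b u v : E a b (u + v) = E a b u + E a b v.
Proof. by rewrite -[u in LHS]scale1r (proj1 hE) scale1r. Qed.

Lemma EZ a b c u : E a b (c *: u) = c *: E a b u.
Proof. by rewrite -[c *: u]addr0 (proj1 hE) E0 addr0. Qed.

Lemma Esum a b (s : seq ((idx m n -> K) * V)) :
  E a b (\sum_(x <- s) x.2) = \sum_(x <- s) E a b x.2.
Proof.
elim: s => [|x s IH]; first by rewrite !big_nil E0.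
by rewrite !big_cons ED IH.
Qed.

Lemma E_weight (mu : idx m n -> K) v a b : weight_vec E mu v ->
  weight_vec E (fun c => mu c + (c == a)%:R - (c == b)%:R) (E a b v).
Proof.
move=> hv c.
have := proj2 hE c c a b v.
have -> : psign K c c a b = 1 by rewrite /psign addbb.
rewrite !scale1r hv EZ.
case: (eqVneq c a) => [ca|ca]; case: (eqVneq b c) => [bc|bc] /=.
- subst; rewrite subrr addrK => /eqP; rewrite subr_eq0 => /eqP ->; by [].
- subst; rewrite subr0 => /eqP; rewrite subr_eq => /eqP ->.
  by rewrite subr0 scalerDl scale1r addrC.
- subst; rewrite sub0r => /eqP; rewrite subr_eq => /eqP ->.
  by rewrite addr0 scalerBl scale1r addrC.
- rewrite subr0 addr0 subr0 => /eqP; rewrite subr_eq0 => /eqP ->; by [].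
Qed.

End Aux.

Lemma sum_zero (m n : nat) (K : fieldType) (V : lmodType K)
  (E : idx m n -> idx m n -> V -> V) (hE : is_gl_module E) a b
  (s : seq ((idx m n -> K) * V)) :
  (forall x, List.In x s -> E a b x.2 = 0) -> E a b (\sum_(x <- s) x.2) = 0.
Proof.
elim: s => [|x s IH] h; first by rewrite big_nil E0.
rewrite big_cons ED // h /=; last by left.
by rewrite IH ?add0r // => y hy; apply: h; right.
Qed.

Theorem corollary3p13 (m n p : nat) (hp1 : (1 <= p)%N) (hpm : (p <= m)%N)
  (K : fieldType) (hK : [pchar K] =i pred0) (V : lmodType K)
  (E : idx m n -> idx m n -> V -> V)
  (hE : is_gl_module E) (hpoly : polynomial_module E)
  (la : seq nat) (hla : is_partition la) (hhook : hook p n la) :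
  forall v : V,
    trunc_sing E p (fun a => (lam_pn p la a)%:R) v <->
    sigma_sing E p (fun a => (lam_sigma p la a)%:R) v.
Proof.
have lamE : forall a : idx m n, lam_sigma p la a = lam_pn p la a.
  case=> [i|j] //=; case: ifP => // /negbT; rewrite -leqNgt => hi.
  apply/eqP; rewrite subn_eq0; apply: leq_trans hhook.
  rewrite /part; case: (ltnP i (size la)) => hs; last by rewrite nth_default.
  apply: (sorted_leq_nth (leT := geq)) => //.
  - by move=> x y z /= h1 h2; apply: leq_trans h1.
  - by move=> x; exact: leqnn.
  - by rewrite inE (leq_ltn_trans hi hs).
have lam0 : forall a : idx m n, ~~ in_sub p a -> lam_pn p la a = 0%N.
  by case=> [i|j] //= /negbTE ->.
have subrank : forall a b : idx m n, in_sub p a -> in_sub p b ->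
    sigma_lt p a b = std_lt a b.
  case=> [i|j] [i2|j2] /= hi hj; rewrite /sigma_lt /std_lt /= ?hi ?hj.
  - by [].
  - have h := ltn_ord i; apply/idP/idP => _; lia.
  - have h := ltn_ord i2; apply/idP/idP => h2; lia.
  - by rewrite !ltn_add2l.
have insub_lt : forall a b : idx m n, in_sub p b -> sigma_lt p a b -> in_sub p a.
  case=> [i|j] [i2|j2] //=; rewrite /sigma_lt /=.
  - case: ifP => // /negbT; rewrite -leqNgt => hi hi2; rewrite hi2; lia.
  - case: ifP => // /negbT; rewrite -leqNgt => hi _; have := ltn_ord j2; lia.
have char0 : forall k : nat, (k.+1%:R == 0 :> K) = false.
  by move=> k; rewrite ((pcharf0P K).1 hK).
move=> v; split.
- move=> [[s [vs hs]] [hw hsing]].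
  have hw' : weight_vec E (fun a => (lam_sigma p la a)%:R) v.
    move=> a; rewrite lamE; case: (boolP (in_sub p a)) => ha; first exact: hw.
    rewrite lam0 // scale0r vs; apply: sum_zero => // x /hs [hx1 hx2].
    by rewrite hx1 hx2 // scale0r.
  split=> // a b hab.
  case: (boolP (in_sub p b)) => hb.
    have ha := insub_lt _ _ hb hab.
    by apply: hsing => //; rewrite -subrank.
  have hab' : a != b by apply/eqP => eab; move: hab; rewrite eab /sigma_lt ltnn.
  apply/eqP; apply/negP => /negP hw0.
  have := E_weight hE a b hw'.
  move=> /(proj2 hpoly _ _ hw0) [k /(_ b)].
  rewrite eqxx eq_sym (negbTE hab') lamE lam0 // add0r sub0r => /eqP.
  by rewrite eq_sym -subr_eq0 opprK natr1 char0.
- move=> [hw hsing]; split; last split.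
  + exists [:: ((fun a => (lam_sigma p la a)%:R), v)]; split.
      by rewrite big_cons big_nil addr0.
    move=> x [<-|[]]; split => //= a ha.
    by rewrite lamE lam0.
  + by move=> a _; rewrite -lamE; apply: hw.
  + by move=> a b ha hb hab; apply: hsing; rewrite subrank.
Qed.
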